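(* Let $r,u\in\mathbb{R}^p$, $\eta\in\mathbb{R}$, $H$ symmetric positive semidefinite, $q\ge0$, $K:=H+2qI_p\succ0$, and $\pi\in[0,1]$. For a vector $g\in\mathbb{R}^p$ let $\mathcal{M}[g]:=\max_{z:\,u^\top z\le0}\big(g^\top z-\tfrac12 z^\top Kz\big)$. Let $\mathcal{M}:=\mathcal{M}[r]$ and $\tilde{\mathcal{M}}(\pi):=\mathcal{M}[(1-\pi)r+\pi\eta u]$. Then $$\tilde{\mathcal{M}}(\pi)\le(1-\pi)^2\,\mathcal{M}+\frac{\pi(1-\pi)}{2}\,\eta^2\,\frac{\|u\|_2^2}{\lambda_{\min}(K)}.$$ In particular $\tilde{\mathcal{M}}$ decreases monotonically in $\pi$, and, for any $U^{\mathrm{hon}}>0$, the Price-of-Gaming upper bound $\sqrt{2(u^\top K^{-1}u)\,\tilde{\mathcal{M}}(\pi)}\,/\,U^{\mathrm{hon}}$ also decreases monotonically as $\pi$ increases.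
   Context: Setting: rewards depend on the mixed signal $\tilde s=(1-\pi)s+\pi c$, where $s$ is the observed signal (with reward gradient $r$ with respect to the manipulation $z$) and $c$ is a private-holdout challenge score with $\mathbb{E}[c\mid z]=\eta\,u^\top z$; hence the effective reward gradient is $(1-\pi)r+\pi\eta u$. $u$ is the welfare gradient, $H$ audit curvature, $q$ isotropic damping, and $\mathcal{M}[\cdot]$ is the Manipulability Index (maximal reward gain over manipulations that do not increase first-order welfare loss).
   Formalization: The challenge sensitivity η in $\mathbb{E}[c\mid z]=\eta\,u^\top z$ is restricted to η ≥ 0 rather than ranging over all of ℝ. The statement above fails without it. *)

(* Defs.v *)
From mathcomp Require Import all_boot all_order all_algebra.
From mathcomp Require Import classical_sets reals.
Set Implicit Arguments. Unset Strict Implicit. Unset Printing Implicit Defensive.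
Import Order.TTheory GRing.Theory Num.Theory.
Local Open Scope ring_scope.
Local Open Scope classical_set_scope.

Section Defs.
Variables (R : realType) (p : nat).

Definition dotv (g z : 'cV[R]_p) : R := (g^T *m z) 0 0.

Definition qform (A : 'M[R]_p) (z : 'cV[R]_p) : R := (z^T *m A *m z) 0 0.

Definition sym_mx (A : 'M[R]_p) : Prop := A^T = A.

Definition psd (A : 'M[R]_p) : Prop :=
  sym_mx A /\ forall z : 'cV[R]_p, 0 <= qform A z.

Definition posdef (A : 'M[R]_p) : Prop :=
  sym_mx A /\ forall z : 'cV[R]_p, z != 0 -> 0 < qform A z.

Definition lambda_min (A : 'M[R]_p) : R := inf [set a : R | eigenvalue A a].

(* Manipulability Index  M[g] = max_{z : u^T z <= 0} (g^T z - 1/2 z^T K z),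
   written as the supremum of the attained values (the max exists for K > 0). *)
Definition manip (K : 'M[R]_p) (u g : 'cV[R]_p) : R :=
  sup [set v : R | exists z : 'cV[R]_p,
         dotv u z <= 0 /\ v = dotv g z - 2^-1 * qform K z].

Definition manip_mix (K : 'M[R]_p) (u r : 'cV[R]_p) (eta pi : R) : R :=
  manip K u ((1 - pi) *: r + (pi * eta) *: u).

Definition pog_bound (K : 'M[R]_p) (u r : 'cV[R]_p) (eta pi Uhon : R) : R :=
  Num.sqrt (2 * qform (invmx K) u * manip_mix K u r eta pi) / Uhon.

End Defs.

(* Main.v *)
Require Import Defs.
From mathcomp Require Import all_boot all_order all_algebra.
From mathcomp Require Import boolp classical_sets reals ring lra.
Import Order.TTheory GRing.Theory Num.Theory.
Local Open Scope ring_scope.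
Local Open Scope classical_set_scope.

Section H.
Variables (R : realType) (p : nat).
Implicit Types (g u z w : 'cV[R]_p) (K : 'M[R]_p).

Lemma dotvDl (a b : R) g1 g2 z : dotv (a *: g1 + b *: g2) z = a * dotv g1 z + b * dotv g2 z.
Proof. by rewrite /dotv linearD !linearZ /= mulmxDl -!scalemxAl !mxE. Qed.

Lemma dotvZr (a : R) g z : dotv g (a *: z) = a * dotv g z.
Proof. by rewrite /dotv -scalemxAr mxE. Qed.

Lemma qformZ (a : R) K z : qform K (a *: z) = a ^+ 2 * qform K z.
Proof. by rewrite /qform linearZ /= linearZ /= -!scalemxAl !mxE mulrA expr2. Qed.

Lemma dotvC g z : dotv g z = dotv z g.
Proof. rewrite /dotv. have e : (z^T *m g) = (g^T *m z)^T by rewrite trmx_mul trmxK. by rewrite e [RHS]mxE. Qed.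

Lemma dotv_ge0 g : 0 <= dotv g g.
Proof. rewrite /dotv mxE; apply: sumr_ge0 => i _; rewrite mxE -expr2; exact: sqr_ge0. Qed.

Lemma qform0 K : qform K 0 = 0.
Proof. by rewrite /qform mulmx0 mxE. Qed.

Lemma posdef_ge0 K z : posdef K -> 0 <= qform K z.
Proof.
case=> _ hK; have [->|nz] := eqVneq z 0; first by rewrite qform0.
exact/ltW/hK.
Qed.

Lemma posdef_unit K : posdef K -> K \in unitmx.
Proof.
move=> [_ hK]; rewrite -row_free_unit -kermx_eq0; apply/rowV0P => v /sub_kermxP vK.
apply/eqP; apply/negPn/negP => nz.
have nzT : v^T != 0 by rewrite -(inj_eq (@trmx_inj _ _ _)) trmxK linear0.
have := hK _ nzT; rewrite /qform trmxK vK mul0mx mxE ltxx //.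
Qed.

Lemma entB (A B : 'M[R]_1) : (A - B) 0 0 = A 0 0 - B 0 0.
Proof. by rewrite !mxE. Qed.
Lemma entD (A B : 'M[R]_1) : (A + B) 0 0 = A 0 0 + B 0 0.
Proof. by rewrite !mxE. Qed.

Definition mset K u g := [set v : R | exists z : 'cV[R]_p,
         dotv u z <= 0 /\ v = dotv g z - 2^-1 * qform K z].

Lemma dotv0 g : dotv g 0 = 0.
Proof. by rewrite /dotv mulmx0 mxE. Qed.

Lemma mset0 K u g : mset K u g 0.
Proof. by exists 0; split; rewrite ?dotv0 // qform0 mulr0 subr0. Qed.

Lemma value_bound K g z : posdef K ->
  dotv g z - 2^-1 * qform K z <= 2^-1 * qform K (invmx K *m g).
Proof.
move=> hK; have Ku := posdef_unit K hK; have sK : K^T = K by case: hK.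
set s := invmx K *m g.
have h0 := posdef_ge0 K (s - z) hK.
have E : (s - z)^T *m K *m (s - z) =
   (s^T *m K *m s - z^T *m K *m s) - (s^T *m K *m z - z^T *m K *m z).
  by rewrite [(s - z)^T]linearB /= mulmxBr !mulmxBl.
have X : s^T *m K *m z = g^T *m z.
  by rewrite /s trmx_mul trmx_inv sK -(mulmxA _ (invmx K) K) mulVmx // mulmx1.
have Y : z^T *m K *m s = z^T *m g.
  by rewrite /s mulmxA -(mulmxA _ K) mulmxV // mulmx1.
move: h0; rewrite /qform E !entB X Y -/(dotv g z) -/(dotv z g) -dotvC.
rewrite -/(qform K s) -/(qform K z) => h0.
lra.
Qed.

Lemma mset_has_sup K u g : posdef K -> has_sup (mset K u g).
Proof.
move=> hK; split; first by exists 0; apply: mset0.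
exists (2^-1 * qform K (invmx K *m g)) => v [z [_ ->]]; exact: value_bound.
Qed.

Lemma manip_ge0 K u g : posdef K -> 0 <= manip K u g.
Proof. by move=> hK; apply: (sup_upper_bound (mset_has_sup K u g hK)); apply: mset0. Qed.

Lemma manip_scale K u g (t c : R) : posdef K -> 0 <= t -> 0 <= c ->
  manip K u (t *: g + c *: u) <= t ^+ 2 * manip K u g.
Proof.
move=> hK t0 c0; apply: ge_sup; first by exists 0; apply: mset0.
move=> v [z [hz ->]]; rewrite dotvDl.
have q0 := posdef_ge0 K z hK.
have cu : c * dotv u z <= 0 by rewrite mulr_ge0_le0.
have [->|tn0] := eqVneq t 0.
  rewrite mul0r add0r expr2 !mul0r; lra.
have tp : 0 < t by rewrite lt_def tn0.
set w := t^-1 *: z.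
have zw : z = t *: w by rewrite /w scalerA mulfV // scale1r.
have hw : dotv u w <= 0 by rewrite /w dotvZr mulr_ge0_le0 // invr_ge0 ltW.
have hs : dotv g w - 2^-1 * qform K w <= manip K u g.
  by apply: (sup_upper_bound (mset_has_sup K u g hK)); exists w.
clearbody w; rewrite zw !dotvZr qformZ; rewrite zw dotvZr in cu.
have ht2 : 0 <= t ^+ 2 by rewrite sqr_ge0.
have := ler_wpM2l ht2 hs; rewrite mulrBr expr2 => h.
move: h cu; set A := dotv g w; set B := dotv u w; set Q := qform K w; set M := manip K u g => h cu. lra.
Qed.

Lemma lambda_min_ge0 K : posdef K -> 0 <= lambda_min K.
Proof.
move=> hK; rewrite /lambda_min.
have [[a ea]|ne] := pselect (exists a, eigenvalue K a); last first.
  have -> : [set a : R | eigenvalue K a] = set0.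
    by apply/seteqP; split => // a /= ea; apply: ne; exists a.
  by rewrite inf0.
apply: lb_le_inf; first by exists a.
move=> b /= /eigenvalueP [v vK nz].
have nzT : v^T != 0 by rewrite -(inj_eq (@trmx_inj _ _ _)) trmxK linear0.
have := (proj2 hK) _ nzT; rewrite /qform trmxK vK -scalemxAl mxE.
have : 0 <= dotv v^T v^T := dotv_ge0 _.
rewrite /dotv trmxK => d0 h.
rewrite leNgt; apply/negP => bn; move: h; rewrite ltNge => /negP; apply.
by rewrite mulr_le0_ge0 // ltW.
Qed.
End H.

Local Close Scope classical_set_scope.

Theorem theorem8 (R : realType) (p : nat) (r u : 'cV[R]_p) (eta q : R)
    (H : 'M[R]_p) :
  psd H -> 0 <= q -> posdef (H + (2 * q)%:M) ->
  0 <= eta ->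
  let K := H + (2 * q)%:M in
  (forall pi : R, 0 <= pi <= 1 ->
     manip_mix K u r eta pi
       <= (1 - pi) ^+ 2 * manip K u r
          + pi * (1 - pi) / 2 * eta ^+ 2 * (dotv u u / lambda_min K))
  /\ (forall pi1 pi2 : R, 0 <= pi1 -> pi1 <= pi2 -> pi2 <= 1 ->
        manip_mix K u r eta pi2 <= manip_mix K u r eta pi1)
  /\ (forall Uhon : R, 0 < Uhon ->
      forall pi1 pi2 : R, 0 <= pi1 -> pi1 <= pi2 -> pi2 <= 1 ->
        pog_bound K u r eta pi2 Uhon <= pog_bound K u r eta pi1 Uhon).
Proof.
move=> _ _ hK eta0 K.
have mono : forall pi1 pi2 : R, 0 <= pi1 -> pi1 <= pi2 -> pi2 <= 1 ->
        manip_mix K u r eta pi2 <= manip_mix K u r eta pi1.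
  move=> pi1 pi2 h1 h12 h2.
  have [e1|n1] := eqVneq pi1 1.
    have e2 : pi2 = pi1 by apply/le_anti; rewrite h12 e1 h2.
    by rewrite e2.
  have a1 : 0 < 1 - pi1.
    by rewrite subr_gt0 lt_def eq_sym n1 (le_trans h12 h2).
  set t := (1 - pi2) / (1 - pi1).
  set c := eta * (pi2 - pi1) / (1 - pi1).
  have t0 : 0 <= t by apply: divr_ge0; [rewrite subr_ge0 | exact: ltW].
  have t1 : t <= 1 by rewrite /t ler_pdivrMr // mul1r lerB.
  have c0 : 0 <= c by apply: divr_ge0; [apply: mulr_ge0 => //; rewrite subr_ge0 | exact: ltW].
  have E : (1 - pi2) *: r + (pi2 * eta) *: u
         = t *: ((1 - pi1) *: r + (pi1 * eta) *: u) + c *: u.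
    rewrite scalerDr !scalerA -addrA -scalerDl; congr (_ *: r + _ *: u).
      by rewrite /t divfK // gt_eqF.
    by rewrite /t /c; field; rewrite gt_eqF.
  rewrite /manip_mix E.
  apply: le_trans (@manip_scale R p K u ((1 - pi1) *: r + (pi1 * eta) *: u) t c hK t0 c0) _.
  have m0 := @manip_ge0 R p K u ((1 - pi1) *: r + (pi1 * eta) *: u) hK.
  rewrite -[X in _ <= X]mul1r ler_wpM2r // expr_le1 //.
split; last split => //.
- move=> pi /andP [p0 p1].
  have hm : manip_mix K u r eta pi <= (1 - pi) ^+ 2 * manip K u r.
    apply: manip_scale => //; first by rewrite subr_ge0.
    exact: mulr_ge0.
  apply: (le_trans hm); rewrite lerDl.
  apply: mulr_ge0; last first.
    apply: divr_ge0; first exact: dotv_ge0.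
    exact: lambda_min_ge0.
  apply: mulr_ge0; last exact: sqr_ge0.
  by apply: divr_ge0 => //; apply: mulr_ge0 => //; rewrite subr_ge0.
- move=> U U0 pi1 pi2 h1 h12 h2.
  rewrite /pog_bound; apply: ler_wpM2r; first by rewrite invr_ge0 ltW.
  have hm := mono _ _ h1 h12 h2.
  set Q := qform (invmx K) u.
  have m1 := @manip_ge0 R p K u ((1 - pi1) *: r + (pi1 * eta) *: u) hK.
  have m2 := @manip_ge0 R p K u ((1 - pi2) *: r + (pi2 * eta) *: u) hK.
  move: hm m1 m2; rewrite /manip_mix.
  set M1 := manip K u _; set M2 := manip K u _ => hm m1 m2.
  have [Q0|Qn] := leP 0 Q.
    apply: ler_wsqrtr; rewrite -!mulrA; apply: ler_wpM2l => //; exact: ler_wpM2l.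
  have -> : Num.sqrt (2 * Q * M1) = 0.
    by apply: ler0_sqrtr; rewrite -mulrA pmulr_rle0 // nmulr_rle0.
  exact: sqrtr_ge0.
Qed.
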